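(* Let $K\ge 2$ and let $\boldsymbol{x}_1\in\mathbb{R}^{p_1},\dots,\boldsymbol{x}_K\in\mathbb{R}^{p_K}$ be random vectors whose entries lie in $\mathcal{L}_0^2$. Let $r_k=\dim\operatorname{span}(\boldsymbol{x}_k^\top)\ge 1$ and $r_f=\dim\sum_{k=1}^K\operatorname{span}(\boldsymbol{x}_k^\top)$. Let $\boldsymbol{f}_k\in\mathbb{R}^{r_k}$ be a random vector whose entries form an orthonormal basis of $\operatorname{span}(\boldsymbol{x}_k^\top)$ (so $\operatorname{cov}(\boldsymbol{f}_k)=\mathbf{I}_{r_k}$), let $\boldsymbol{f}=(\boldsymbol{f}_1^\top,\dots,\boldsymbol{f}_K^\top)^\top$, and let $\boldsymbol{\eta}^{(1)},\dots,\boldsymbol{\eta}^{(r_f)}$ be orthonormal eigenvectors of $\operatorname{cov}(\boldsymbol{f})$ with $\boldsymbol{\eta}^{(\ell)}$ corresponding to the $\ell$th largest eigenvalue $\lambda_\ell(\operatorname{cov}(\boldsymbol{f}))$; write $\boldsymbol{\eta}^{(\ell)}=((\boldsymbol{\eta}^{(\ell)}_1)^\top,\dots,(\boldsymbol{\eta}^{(\ell)}_K)^\top)^\top$ with $\boldsymbol{\eta}^{(\ell)}_k\in\mathbb{R}^{r_k}$. (Note $r_f=\operatorname{rank}\operatorname{cov}(\boldsymbol{f})$.) Consider, for $\ell=1,\dots,r_f$, the $\ell$th stage of Carroll's GCCA: $$\max_{z_1,\dots,z_K,w}\ \sum_{k=1}^K\cos^2\{\theta(z_k,w)\}\quad\text{s.t.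 } z_k\in\operatorname{span}(\boldsymbol{x}_k^\top),\ \|z_k\|=1\ (k\le K),\quad w\in\mathcal{L}_0^2,\ \|w\|=1,\ w\perp w^{(j)}\ (0\le j\le \ell-1),$$ where $w^{(0)}=0$ and $w^{(1)},\dots,w^{(\ell-1)}$ are the auxiliary variables chosen at the earlier stages. Then: (i) For every $\ell\le r_f$ and $k\le K$, a solution $(z^{(\ell)}_1,\dots,z^{(\ell)}_K,w^{(\ell)})$ of stage $\ell$ (with earlier stages solved in the same way) is given by $$w^{(\ell)}=[\lambda_\ell(\operatorname{cov}(\boldsymbol{f}))]^{-1/2}(\boldsymbol{\eta}^{(\ell)})^\top\boldsymbol{f},\qquad z_k^{(\ell)}=\begin{cases}\text{any standardized variable in }\operatorname{span}(\boldsymbol{x}_k^\top),&\boldsymbol{\eta}_k^{(\ell)}=\boldsymbol{0},\\ \pm(\boldsymbol{\eta}_k^{(\ell)}/\|\boldsymbol{\eta}_k^{(\ell)}\|_F)^\top\boldsymbol{f}_k,&\boldsymbol{\eta}_k^{(\ell)}\neq\boldsymbol{0}.\end{cases}$$ Moreover, $\cos\{\theta(z_k^{(\ell)},w^{(\ell)})\}=\pm[\lambda_\ell(\operatorname{cov}(\boldsymbol{f}))]^{1/2}\|\boldsymbol{\eta}_k^{(\ell)}\|_F$, $\sum_{k=1}^K\cos^2\{\theta(z_k^{(\ell)},w^{(\ell)})\}=\lambda_\ell(\operatorname{cov}(\boldsymbol{f}))$, and $\sum_{k=1}^K\operatorname{span}(\boldsymbol{x}_k^\top)=\operatorname{span}(\{w^{(\ell)}\}_{\ell=1}^{r_f})$.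 (ii) For $\ell\le r_f$, redefine $z_k^{(\ell)}=0$ if $\boldsymbol{\eta}_k^{(\ell)}=\boldsymbol{0}$ (equivalently $w^{(\ell)}\perp\operatorname{span}(\boldsymbol{x}_k^\top)$) and $z_k^{(\ell)}=(\boldsymbol{\eta}_k^{(\ell)}/\|\boldsymbol{\eta}_k^{(\ell)}\|_F)^\top\boldsymbol{f}_k$ otherwise. Then $\theta(z_k^{(\ell)},w^{(\ell)})\in[0,\pi/2]$ and $\operatorname{span}(\{z_k^{(\ell)}\}_{\ell=1}^{r_f})=\operatorname{span}(\boldsymbol{x}_k^\top)$ for every $k\le K$. (iii) For $z_k^{(\ell)}$ defined either as in (i) or as in (ii): if for some $\ell\le r_f$ and some $k\le K$ we have $\lambda_\ell(\operatorname{cov}(\boldsymbol{f}))\le 1$ and $\operatorname{span}(\{z_k^{(m)}\}_{m=1}^{\ell-1})\neq\operatorname{span}(\boldsymbol{x}_k^\top)$, then there exists a solution $w^{(\ell)}$ of the $\ell$th stage with $w^{(\ell)}\in\operatorname{span}(\boldsymbol{x}_k^\top)$ and $w^{(\ell)}\perp\sum_{1\le j\neq k\le K}\operatorname{span}(\boldsymbol{x}_j^\top)$.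
   Context: $\mathcal{L}_0^2$ denotes the vector space of real-valued random variables with zero mean and finite variance, endowed with the covariance $\operatorname{cov}(\cdot,\cdot)$ as inner product; $\|x\|=\sqrt{\operatorname{var}(x)}$, $\perp$ means zero covariance (uncorrelatedness), and $\theta(x,y)$ is the angle in this inner product space, so $\cos\{\theta(x,y)\}=\operatorname{corr}(x,y)$ with the convention $\operatorname{corr}(x,0)=0$. For a random vector $\boldsymbol{v}$ with entries in $\mathcal{L}_0^2$, $\operatorname{span}(\boldsymbol{v}^\top)$ is the subspace of $\mathcal{L}_0^2$ spanned by its entries, and sums of subspaces are the usual sums. A standardized variable is one with unit variance. *)

(* Defs.v *)
(* The ambient space L_0^2 is modelled abstractly as a
   vector space V over a real closed field R equipped with an inner product
   [cov] (covariance). *)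
From HB Require Import structures.
From mathcomp Require Import all_boot all_order all_algebra.
Set Implicit Arguments. Unset Strict Implicit. Unset Printing Implicit Defensive.
Import Order.TTheory GRing.Theory Num.Theory.
Local Open Scope ring_scope.

Section GCCA.
Variables (R : rcfType) (V : lmodType R) (cov : V -> V -> R).

Definition inner_product : Prop :=
  [/\ forall u v, cov u v = cov v u,
      forall (a : R) u v w, cov (a *: u + v) w = a * cov u w + cov v w
    & forall u, u != 0 -> 0 < cov u u].

Definition sd (u : V) : R := Num.sqrt (cov u u).

(* cos theta(u,v) = corr(u,v), with corr(u,0) = corr(0,v) = 0 *)
Definition corr (u v : V) : R :=
  if (sd u == 0) || (sd v == 0) then 0 else cov u v / (sd u * sd v).

Definition inspanP (I : finType) (P : pred I) (g : I -> V) (v : V) : Prop :=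
  exists c : I -> R, v = \sum_(i | P i) c i *: g i.

Definition inspan (I : finType) (g : I -> V) (v : V) : Prop :=
  inspanP predT g v.

Definition lin_indep (I : finType) (g : I -> V) : Prop :=
  forall c : I -> R, \sum_i c i *: g i = 0 -> forall i, c i = 0.

Definition is_dim (S : V -> Prop) (n : nat) : Prop :=
  exists b : 'I_n -> V, lin_indep b /\ (forall v, S v <-> inspan b v).

Definition orthonormalF (I : finType) (g : I -> V) : Prop :=
  forall i j, cov (g i) (g j) = (i == j)%:R.

Definition sum_span (K : nat) (p : 'I_K -> nat) (x : forall k, 'I_(p k) -> V)
  (P : pred 'I_K) (v : V) : Prop :=
  exists u : 'I_K -> V, (forall k, P k -> inspan (x k) (u k)) /\
                        v = \sum_(k | P k) u k.

(* feasible points of a GCCA stage, [prev] = previously chosen w^(j) *)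
Definition stage_feasible (K : nat) (p : 'I_K -> nat)
  (x : forall k, 'I_(p k) -> V) (prev : seq V) (z : 'I_K -> V) (w : V) : Prop :=
  [/\ forall k, inspan (x k) (z k) /\ cov (z k) (z k) = 1,
      cov w w = 1
    & forall u, u \in prev -> cov w u = 0].

Definition gcca_obj (K : nat) (z : 'I_K -> V) (w : V) : R :=
  \sum_k corr (z k) w ^+ 2.

Definition stage_solution (K : nat) (p : 'I_K -> nat)
  (x : forall k, 'I_(p k) -> V) (prev : seq V) (z : 'I_K -> V) (w : V) : Prop :=
  stage_feasible x prev z w /\
  forall z' w', stage_feasible x prev z' w' -> gcca_obj z' w' <= gcca_obj z w.

(* Objects built from f = (f_1^T,...,f_K^T)^T, indexed by {k & 'I_(r k)} *)
Variables (K : nat) (r : 'I_K -> nat) (fv : {k : 'I_K & 'I_(r k)} -> V).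

Definition fk (k : 'I_K) (i : 'I_(r k)) : V := fv (existT _ k i).

Definition etanorm (rf : nat) (eta : 'I_rf -> {k : 'I_K & 'I_(r k)} -> R)
  (l : 'I_rf) (k : 'I_K) : R :=
  Num.sqrt (\sum_(i < r k) eta l (existT _ k i) ^+ 2).

Definition wsol (rf : nat) (lam : 'I_rf -> R)
  (eta : 'I_rf -> {k : 'I_K & 'I_(r k)} -> R) (l : 'I_rf) : V :=
  (Num.sqrt (lam l))^-1 *: \sum_t eta l t *: fv t.

Definition zdir (rf : nat) (eta : 'I_rf -> {k : 'I_K & 'I_(r k)} -> R)
  (l : 'I_rf) (k : 'I_K) : V :=
  \sum_(i < r k) (eta l (existT _ k i) / etanorm eta l k) *: fk i.

Definition zII (rf : nat) (eta : 'I_rf -> {k : 'I_K & 'I_(r k)} -> R)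
  (l : 'I_rf) (k : 'I_K) : V :=
  if etanorm eta l k == 0 then 0 else zdir eta l k.

Definition validI (p : 'I_K -> nat) (x : forall k, 'I_(p k) -> V) (rf : nat)
  (eta : 'I_rf -> {k : 'I_K & 'I_(r k)} -> R) (l : 'I_rf) (k : 'I_K) (z : V)
  : Prop :=
  if etanorm eta l k == 0 then inspan (x k) z /\ cov z z = 1
  else exists s : R, (s = 1 \/ s = -1) /\ z = s *: zdir eta l k.

Definition prevw (rf : nat) (lam : 'I_rf -> R)
  (eta : 'I_rf -> {k : 'I_K & 'I_(r k)} -> R) (l : 'I_rf) : seq V :=
  [seq wsol lam eta m | m : 'I_rf <- enum 'I_rf & (m < l)%N].

End GCCA.

(* mu is the (l+1)-th largest eigenvalue (counted with multiplicity, l is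
   0-based) of the symmetric matrix A indexed by the finite type T:
   A has an orthonormalF eigenbasis with eigenvalues sorted nonincreasingly,
   and mu is the entry at position l. *)
Definition kth_eig (R : rcfType) (T : finType) (A : T -> T -> R) (l : nat)
  (mu : R) : Prop :=
  exists (e : 'I_#|T| -> T -> R) (nu : 'I_#|T| -> R),
    [/\ forall i j, \sum_t e i t * e j t = (i == j)%:R,
        forall i t, \sum_s A t s * e i s = nu i * e i t,
        forall i j : 'I_#|T|, (i <= j)%N -> nu j <= nu i
      & exists i : 'I_#|T|, val i = l /\ nu i = mu].

(* Main.v *)
Require Import Defs.
From HB Require Import structures.
From mathcomp Require Import all_boot all_order all_algebra.
From Stdlib Require Import ClassicalEpsilon.
From mathcomp Require Import ring lra.
Set Implicit Arguments. Unset Strict Implicit. Unset Printing Implicit Defensive.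
Import Order.TTheory GRing.Theory Num.Theory.
Local Open Scope ring_scope.

Section Span.
Variables (R : rcfType) (W : lmodType R).

Lemma spanP_gen (I : finType) (P : pred I) (b : I -> W) i : P i -> inspanP P b (b i).
Proof.
move=> Pi; exists (fun j => (j == i)%:R).
rewrite (bigD1 i) //= eqxx scale1r big1 ?addr0 // => j /andP[_ /negbTE->].
by rewrite scale0r.
Qed.

Lemma spanP_0 (I : finType) (P : pred I) (b : I -> W) : inspanP P b 0.
Proof. by exists (fun=> 0); rewrite big1 // => i _; rewrite scale0r. Qed.

Lemma spanP_add (I : finType) (P : pred I) (b : I -> W) u v :
  inspanP P b u -> inspanP P b v -> inspanP P b (u + v).
Proof.
move=> [c1 ->] [c2 ->]; exists (fun i => c1 i + c2 i).
by rewrite -big_split; apply: eq_bigr => i _; rewrite scalerDl.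
Qed.

Lemma spanP_scale (I : finType) (P : pred I) (b : I -> W) a v :
  inspanP P b v -> inspanP P b (a *: v).
Proof.
move=> [c ->]; exists (fun i => a * c i).
by rewrite scaler_sumr; apply: eq_bigr => i _; rewrite scalerA.
Qed.

Lemma spanP_sum (I J : finType) (P : pred I) (b : I -> W) (Q : pred J) (F : J -> W) :
  (forall j, Q j -> inspanP P b (F j)) -> inspanP P b (\sum_(j | Q j) F j).
Proof.
move=> H; apply: (big_ind (inspanP P b)) => //; first exact: spanP_0.
exact: spanP_add.
Qed.

Lemma spanP_trans (I J : finType) (P : pred I) (b : I -> W) (Q : pred J) (g : J -> W) v :
  (forall j, Q j -> inspanP P b (g j)) -> inspanP Q g v -> inspanP P b v.
Proof.
move=> H [c ->]; apply: spanP_sum => j Qj; exact/spanP_scale/H.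
Qed.

Lemma steinitz_ord n m (b : 'I_n -> W) (g : 'I_m -> W) :
  (forall j, inspan b (g j)) -> lin_indep g -> (m <= n)%N.
Proof.
move=> H Hind; rewrite leqNgt; apply/negP => ltnm.
pose cf j := proj1_sig (constructive_indefinite_description _ (H j)).
have cfP j : g j = \sum_i cf j i *: b i :=
  proj2_sig (constructive_indefinite_description _ (H j)).
pose C : 'M[R]_(m, n) := \matrix_(j, i) cf j i.
have : kermx C != 0.
  rewrite -mxrank_eq0 mxrank_ker subn_eq0 -ltnNge.
  exact: leq_ltn_trans (rank_leq_col C) ltnm.
case/rowV0Pn => v /sub_kermxP vC0 v0.
have : \sum_j v 0 j *: g j = 0.
  transitivity (\sum_i (v *m C) 0 i *: b i).
    rewrite (eq_bigr (fun j => \sum_i (v 0 j * cf j i) *: b i)); last first.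
      by move=> j _; rewrite cfP scaler_sumr; apply: eq_bigr => i _; rewrite scalerA.
    rewrite exchange_big /=; apply: eq_bigr => i _; rewrite !mxE scaler_suml.
    by apply: eq_bigr => j _; rewrite mxE.
  by rewrite vC0 big1 // => i _; rewrite mxE scale0r.
move/Hind => h; case/eqP: v0; apply/rowP => j; by rewrite mxE h.
Qed.

Lemma steinitzP (I J : finType) (PI : pred I) (PJ : pred J) (b : I -> W) (g : J -> W) :
  (forall j, PJ j -> inspanP PI b (g j)) ->
  (forall c : J -> R, \sum_(j | PJ j) c j *: g j = 0 -> forall j, PJ j -> c j = 0) ->
  (#|PJ| <= #|PI|)%N.
Proof.
move=> H Hind.
apply: (@steinitz_ord _ _ (fun k => b (enum_val k)) (fun k => g (enum_val k))).
- move=> k; have [c ->] := H _ (enum_valP k).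
  exists (fun k' => c (enum_val k')).
  rewrite -(big_enum_val (A:=PI) (fun i => c i *: b i)).
  by apply: eq_bigl.
- move=> c hc k.
  pose c' j := c (enum_rank_in (enum_valP k) j).
  have h0 : \sum_(j | PJ j) c' j *: g j = 0.
    have -> : \sum_(j | PJ j) c' j *: g j = \sum_(j in PJ) c' j *: g j by apply: eq_bigl.
    rewrite (big_enum_val (A:=PJ) (fun j => c' j *: g j)) /= -[RHS]hc.
    by apply: eq_bigr => i _; rewrite /c' enum_valK_in.
  have := Hind c' h0 _ (enum_valP k).
  by rewrite /c' enum_valK_in.
Qed.

End Span.
Section IP.
Variables (R : rcfType) (W : lmodType R) (ip : W -> W -> R).
Hypothesis hip : inner_product ip.

Lemma ip_sym u v : ip u v = ip v u.
Proof. by case: hip. Qed.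

Lemma ip_lin a u v w : ip (a *: u + v) w = a * ip u w + ip v w.
Proof. by case: hip. Qed.

Lemma ip0l w : ip 0 w = 0.
Proof.
have h := ip_lin 1 0 0 w; rewrite scale1r addr0 mul1r in h.
by apply: (@addrI _ (ip 0 w)); rewrite addr0 -h.
Qed.

Lemma ipDl u v w : ip (u + v) w = ip u w + ip v w.
Proof. by have := ip_lin 1 u v w; rewrite scale1r mul1r. Qed.

Lemma ipZl a u w : ip (a *: u) w = a * ip u w.
Proof. by rewrite -[a *: u]addr0 ip_lin ip0l addr0. Qed.

Lemma ipNl u w : ip (- u) w = - ip u w.
Proof. by rewrite -scaleN1r ipZl mulN1r. Qed.

Lemma ipBl u v w : ip (u - v) w = ip u w - ip v w.
Proof. by rewrite ipDl ipNl. Qed.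

Lemma ip0r w : ip w 0 = 0.
Proof. by rewrite ip_sym ip0l. Qed.
Lemma ipDr u v w : ip w (u + v) = ip w u + ip w v.
Proof. by rewrite !(ip_sym w) ipDl. Qed.
Lemma ipZr a u w : ip w (a *: u) = a * ip w u.
Proof. by rewrite !(ip_sym w) ipZl. Qed.
Lemma ipBr u v w : ip w (u - v) = ip w u - ip w v.
Proof. by rewrite !(ip_sym w) ipBl. Qed.

Lemma ip_suml (I : finType) (P : pred I) (F : I -> W) w :
  ip (\sum_(i | P i) F i) w = \sum_(i | P i) ip (F i) w.
Proof. by apply: (big_morph (fun u => ip u w)); [exact: (fun x y => ipDl x y w) | exact: ip0l]. Qed.

Lemma ip_sumr (I : finType) (P : pred I) (F : I -> W) w :
  ip w (\sum_(i | P i) F i) = \sum_(i | P i) ip w (F i).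
Proof. by rewrite ip_sym ip_suml; apply: eq_bigr => i _; rewrite ip_sym. Qed.

Lemma ip_ge0 u : 0 <= ip u u.
Proof.
have [->|u0] := eqVneq u 0; first by rewrite ip0l.
by case: hip => _ _ /(_ u u0) /ltW.
Qed.

Lemma ip_eq0 u : ip u u = 0 -> u = 0.
Proof.
have [//|u0] := eqVneq u 0.
by case: hip => _ _ /(_ u u0) /[swap] -> ; rewrite ltxx.
Qed.

Lemma ip_CS u v : ip u v ^+ 2 <= ip u u * ip v v.
Proof.
have [->|u0] := eqVneq u 0; first by rewrite !ip0l expr0n /= mul0r.
have pu : 0 < ip u u by case: hip => _ _ /(_ u u0).
set t := ip u v / ip u u.
have := ip_ge0 (v - t *: u).
rewrite ipBl !ipBr !ipZl !ipZr (ip_sym v u).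
have -> : ip v v - t * ip u v - (t * ip u v - t * (t * ip u u)) =
          (ip u u * ip v v - ip u v ^+ 2) / ip u u.
  by rewrite /t; field; rewrite gt_eqF.
move=> h.
have : 0 <= (ip u u * ip v v - ip u v ^+ 2) / ip u u * ip u u by apply: mulr_ge0 => //; exact: ltW.
by rewrite mulfVK ?gt_eqF // subr_ge0.
Qed.

Lemma orth_indep (I : finType) (P : pred I) (g : I -> W) :
  (forall i j, P i -> P j -> i != j -> ip (g i) (g j) = 0) ->
  (forall i, P i -> ip (g i) (g i) != 0) ->
  forall c : I -> R, \sum_(j | P j) c j *: g j = 0 -> forall j, P j -> c j = 0.
Proof.
move=> ho hn c hc j Pj.
have := congr1 (fun u => ip u (g j)) hc; rewrite /= ip0l ip_suml (bigD1 j) //=.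
rewrite big1 ?addr0; last first.
  by move=> i /andP[Pi nij]; rewrite ipZl ho ?mulr0.
by rewrite ipZl => /eqP; rewrite mulf_eq0 (negbTE (hn _ Pj)) orbF => /eqP.
Qed.

Lemma span_orth (I J : finType) (PI : pred I) (PJ : pred J) (b : I -> W) (g : J -> W) :
  (#|PI| <= #|PJ|)%N ->
  (forall j j', PJ j -> PJ j' -> ip (g j) (g j') = (j == j')%:R) ->
  (forall j, PJ j -> inspanP PI b (g j)) ->
  forall v, inspanP PI b v -> v = \sum_(j | PJ j) ip v (g j) *: g j.
Proof.
move=> hcard ho hg v hv.
set v' := v - \sum_(j | PJ j) ip v (g j) *: g j.
suff : v' = 0 by move/eqP; rewrite subr_eq0 => /eqP.
apply/eqP/negPn/negP => v'0.
have hort j : PJ j -> ip v' (g j) = 0.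
  move=> Pj; rewrite /v' ipBl ip_suml (bigD1 j) //= ipZl ho // eqxx mulr1.
  rewrite big1 ?addr0 ?subrr // => i /andP[Pi nij].
  by rewrite ipZl ho // (negbTE nij) mulr0.
pose h (o : option J) := if o is Some j then g j else v'.
pose Ph (o : option J) := if o is Some j then PJ j else true.
have hc : #|Ph| = #|PJ|.+1.
  rewrite (cardD1 None) -(card_image (@Some_inj _) PJ) add1n; congr (_.+1).
  apply: eq_card => -[j|]; last by rewrite !inE /=; apply/esym/imageP => -[].
  by rewrite (mem_image (@Some_inj _)).
suff : (#|PJ|.+1 <= #|PJ|)%N by rewrite ltnn.
rewrite -hc; apply: leq_trans hcard.
apply: (@steinitzP R W _ _ PI Ph b h).
- move=> [j /= Pj|_ /=]; first exact: hg.
  apply: spanP_add => //; rewrite -scaleN1r; apply: spanP_scale; apply: spanP_sum => j Pj.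
  by apply: spanP_scale; apply: hg.
- apply: orth_indep.
  + move=> [i|] [j|] /= Pi Pj nij.
    * have nij' : i != j by apply: contraNneq nij => ->.
      by rewrite ho // (negbTE nij').
    * by rewrite ip_sym hort.
    * by rewrite hort.
    * by case/eqP: nij.
  + move=> [i /= Pi|_ /=]; first by rewrite ho // eqxx oner_eq0.
    by apply/eqP => /ip_eq0 /eqP; rewrite (negbTE v'0).
Qed.

End IP.
Lemma card_ord_lt N m : (m <= N)%N -> #|[pred i : 'I_N | (i < m)%N]| = m.
Proof.
move=> le_mN.
have winj : injective (@widen_ord m N le_mN).
  by move=> a b /(congr1 val) /= /val_inj.
rewrite -{2}(card_ord m) -(card_image winj); apply: eq_card => i.
rewrite !inE; apply/idP/imageP => [him|[k _ ->]]; last exact: (ltn_ord k).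
by exists (Ordinal him) => //; apply: val_inj.
Qed.

Lemma card_ord_le N m : (#|[pred i : 'I_N | (i < m)%N]| <= m)%N.
Proof.
have [le_mN|lt_Nm] := leqP m N; first by rewrite card_ord_lt.
by apply: leq_trans (max_card _) _; rewrite card_ord ltnW.
Qed.

Section Spec.
Variables (R : rcfType) (T : finType) (A : T -> T -> R).
Hypothesis Asym : forall t s, A t s = A s t.

Definition dot (u v : {ffun T -> R^o}) : R := \sum_t (u t : R) * (v t : R).
Lemma scaleffE (a : R) (u : {ffun T -> R^o}) t : (a *: u) t = a * (u t : R).
Proof. by rewrite ffunE. Qed.

Lemma dot_ip : inner_product dot.
Proof.
split.
- by move=> u v; apply: eq_bigr => t _; rewrite mulrC.
- move=> a u v w; rewrite /dot mulr_sumr -big_split; apply: eq_bigr => t _.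
  by rewrite ffunE scaleffE mulrDl mulrA.
- move=> u u0; have hsq (x : R) : 0 <= x * x by rewrite -expr2 sqr_ge0.
  rewrite lt_def; apply/andP; split; last by apply: sumr_ge0 => t _; apply: hsq.
  apply: contra u0 => /eqP h; apply/eqP/ffunP => t; rewrite ffunE.
  have := @psumr_eq0P _ _ predT (fun t => (u t : R) * (u t : R)) (fun t _ => hsq (u t)) h t isT.
  by move/eqP; rewrite mulf_eq0 orbb => /eqP.
Qed.

Definition Gop (u : {ffun T -> R^o}) : {ffun T -> R^o} := [ffun t => \sum_s A t s * u s].

Lemma Gop_sym u v : dot (Gop u) v = dot u (Gop v).
Proof.
rewrite /dot; under eq_bigr do rewrite ffunE mulr_suml.
under [RHS]eq_bigr do rewrite ffunE mulr_sumr.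
rewrite exchange_big; apply: eq_bigr => s _; apply: eq_bigr => t _.
by rewrite Asym mulrCA mulrA.
Qed.

Lemma Gop_lin (I : finType) (P : pred I) (c : I -> R) (g : I -> {ffun T -> R^o}) :
  Gop (\sum_(i | P i) c i *: g i) = \sum_(i | P i) c i *: Gop (g i).
Proof.
apply/ffunP => t; rewrite [LHS]ffunE [RHS]sum_ffunE.
under eq_bigr do rewrite sum_ffunE mulr_sumr.
rewrite exchange_big; apply: eq_bigr => i _.
rewrite scaleffE ffunE mulr_sumr; apply: eq_bigr => s _.
by rewrite scaleffE mulrCA.
Qed.

Definition is_wit (e : 'I_#|T| -> T -> R) (nu : 'I_#|T| -> R) :=
  (forall i j, \sum_t e i t * e j t = (i == j)%:R) /\
  (forall i t, \sum_s A t s * e i s = nu i * e i t).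

Definition Ef (e : 'I_#|T| -> T -> R) i : {ffun T -> R^o} := [ffun t => e i t].

Lemma wit_orth e nu : is_wit e nu -> forall i j, dot (Ef e i) (Ef e j) = (i == j)%:R.
Proof.
by case=> h _ i j; rewrite -h; apply: eq_bigr => t _; rewrite !ffunE.
Qed.

Lemma wit_eig e nu : is_wit e nu -> forall i, Gop (Ef e i) = nu i *: Ef e i.
Proof.
case=> _ h i; apply/ffunP => t; rewrite scaleffE !ffunE -h.
by apply: eq_bigr => s _; rewrite ffunE.
Qed.

Definition delta (t : T) : {ffun T -> R^o} := [ffun s => (s == t)%:R].

Lemma span_delta (u : {ffun T -> R^o}) : inspan delta u.
Proof.
exists (fun t => u t); apply/ffunP => s; rewrite sum_ffunE (bigD1 s) //=.
rewrite scaleffE ffunE eqxx mulr1 big1 ?addr0 // => t nts.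
by rewrite scaleffE ffunE eq_sym (negbTE nts) mulr0.
Qed.

Lemma wit_complete e nu : is_wit e nu ->
  forall u, u = \sum_i dot u (Ef e i) *: Ef e i.
Proof.
move=> hw u.
apply: (@span_orth _ _ _ dot_ip T _ predT predT delta (Ef e)).
- by rewrite !cardT /= -!cardE card_ord.
- by move=> j j' _ _; apply: wit_orth hw j j'.
- by move=> j _; apply: span_delta.
- exact: span_delta.
Qed.

Lemma eig_expand e nu (hw : is_wit e nu) g mu i :
  Gop g = mu *: g -> dot g (Ef e i) * (nu i - mu) = 0.
Proof.
move=> hg; have := Gop_sym g (Ef e i).
rewrite hg (wit_eig hw) (ipZl dot_ip) (ipZr dot_ip) => h.
by rewrite mulrBr [_ * nu i]mulrC -h mulrC subrr.
Qed.

Lemma count_eig e nu (hw : is_wit e nu) (Q : pred R) (J : finType) (PJ : pred J)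
  (g : J -> {ffun T -> R^o}) (mu : J -> R) :
  (forall j j', PJ j -> PJ j' -> dot (g j) (g j') = (j == j')%:R) ->
  (forall j, PJ j -> Gop (g j) = mu j *: g j) ->
  (forall j, PJ j -> Q (mu j)) ->
  (#|PJ| <= #|[pred i | Q (nu i)]|)%N /\
  ((#|[pred i | Q (nu i)]| <= #|PJ|)%N -> forall i, Q (nu i) -> inspanP PJ g (Ef e i)).
Proof.
move=> ho heig hQ.
have hsp j : PJ j -> inspanP [pred i | Q (nu i)] (Ef e) (g j).
  move=> Pj; exists (fun i => dot (g j) (Ef e i)).
  rewrite {1}(wit_complete hw (g j)) (bigID [pred i | Q (nu i)]) /=.
  rewrite [X in _ + X]big1 ?addr0 // => i nQi.
  have := eig_expand hw i (heig j Pj); move/eqP; rewrite mulf_eq0 => /orP[/eqP->|].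
    by rewrite scale0r.
  by rewrite subr_eq0 => /eqP hnu; move: nQi; rewrite hnu hQ.
split.
- apply: (steinitzP hsp); apply: (orth_indep dot_ip).
    by move=> i j Pi Pj nij; rewrite ho // (negbTE nij).
  by move=> i Pi; rewrite ho // eqxx oner_eq0.
- move=> hc i Qi; exists (fun j => dot (Ef e i) (g j)).
  apply: (span_orth dot_ip hc ho hsp).
  exact: spanP_gen.
Qed.

Lemma wit_count e nu e' nu' (Q : pred R) : is_wit e nu -> is_wit e' nu' ->
  #|[pred i | Q (nu i)]| = #|[pred i | Q (nu' i)]|.
Proof.
move=> hw hw'; apply/eqP; rewrite eqn_leq; apply/andP; split.
- have [h _] := count_eig hw' (PJ := fun i => Q (nu i)) (g := Ef e) (mu := nu) (Q := Q)
     (fun i j _ _ => wit_orth hw i j) (fun i _ => wit_eig hw i) (fun i h => h).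
  exact: h.
- have [h _] := count_eig hw (PJ := fun i => Q (nu' i)) (g := Ef e') (mu := nu') (Q := Q)
     (fun i j _ _ => wit_orth hw' i j) (fun i _ => wit_eig hw' i) (fun i h => h).
  exact: h.
Qed.


Section SLsec.
Variables (rf : nat) (lam : 'I_rf -> R) (eta : 'I_rf -> T -> R).
Hypothesis heta_on : forall l l' : 'I_rf, \sum_t eta l t * eta l' t = (l == l')%:R.
Hypothesis heta_eig : forall (l : 'I_rf) t, \sum_s A t s * eta l s = lam l * eta l t.
Hypothesis hkth : forall l : 'I_rf, kth_eig A l (lam l).

Definition Etaf m : {ffun T -> R^o} := [ffun t => eta m t].

Lemma Etaf_orth j j' : dot (Etaf j) (Etaf j') = (j == j')%:R.
Proof. by rewrite -heta_on; apply: eq_bigr => t _; rewrite !ffunE. Qed.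

Lemma Etaf_eig j : Gop (Etaf j) = lam j *: Etaf j.
Proof.
apply/ffunP => t; rewrite scaleffE !ffunE -heta_eig.
by apply: eq_bigr => s _; rewrite ffunE.
Qed.

Lemma SL (l : 'I_rf) (u : {ffun T -> R^o}) :
  (forall m : 'I_rf, (m < l)%N -> dot (Etaf m) u = 0) ->
  dot u (Gop u) <= lam l * dot u u /\
  (dot u (Gop u) = lam l * dot u u -> Gop u = lam l *: u).
Proof.
move=> hu.
have [e [nu [he1 he2 hsort [i0 [hi0 hnu]]]]] := hkth l.
have hw : is_wit e nu by split.
set lm := lam l.
pose Q := fun x : R => lm < x.
have hq (m : 'I_rf) : lam m <= lm -> (#|[pred i | Q (nu i)]| <= m)%N.
  move=> hm; have [e' [nu' [h1 h2 hs' [i1 [hi1 hnu1]]]]] := hkth m.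
  have hw' : is_wit e' nu' by split.
  rewrite (wit_count Q hw hw').
  apply: leq_trans (card_ord_le _ m).
  apply: subset_leq_card; apply/subsetP => i; rewrite !inE /Q => hi.
  rewrite ltnNge; apply/negP => him.
  have := hs' i1 i; rewrite hi1 => /(_ him); rewrite hnu1 => h.
  by move: (le_lt_trans (le_trans h hm) hi); rewrite ltxx.
pose P n := [exists m : 'I_rf, (val m == n) && (val m <= l)%N && (lam m <= lm)].
have exP : exists n, P n by exists (val l); apply/existsP; exists l; rewrite eqxx leqnn lexx.
case: (ex_minnP exP) => n0 /existsP [m0 /andP[/andP[/eqP hm0 hm0l] hlm0]] hmin.
have hqn : (#|[pred i | Q (nu i)]| <= n0)%N by rewrite -hm0; apply: hq.
pose PJ := [pred m : 'I_rf | (m < l)%N && (lm < lam m)].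
have hPJ : (n0 <= #|PJ|)%N.
  have hn0 : (n0 <= rf)%N by rewrite -hm0 ltnW // ltn_ord.
  rewrite -{1}(card_ord_lt hn0); apply: subset_leq_card; apply/subsetP => m.
  rewrite !inE => hm.
  have hml : (m < l)%N by apply: leq_trans hm _; rewrite -hm0.
  rewrite hml /= ltNge; apply/negP => hle.
  have : P m by apply/existsP; exists m; rewrite eqxx (ltnW hml) hle.
  by move/hmin; rewrite leqNgt hm.
have [_ hspan] := count_eig hw (PJ := PJ) (g := Etaf) (mu := lam) (Q := Q)
  (fun j j' _ _ => Etaf_orth j j') (fun j _ => Etaf_eig j) (fun m hm => (andP hm).2).
have hspan' := hspan (leq_trans hqn hPJ).
have hz i : lm < nu i -> dot (Ef e i) u = 0.
  move/hspan' => [c ->]; rewrite (ip_suml dot_ip) big1 // => m /andP[hml _].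
  by rewrite (ipZl dot_ip) hu ?mulr0.
pose al i := dot u (Ef e i).
have hue := wit_complete hw u.
have hGu : Gop u = \sum_i (al i * nu i) *: Ef e i.
  by rewrite {1}hue Gop_lin; apply: eq_bigr => i _; rewrite (wit_eig hw) scalerA.
have hdG : dot u (Gop u) = \sum_i al i * nu i * al i.
  by rewrite hGu (ip_sumr dot_ip); apply: eq_bigr => i _; rewrite (ipZr dot_ip).
have hdu : dot u u = \sum_i al i * al i.
  by rewrite {2}hue (ip_sumr dot_ip); apply: eq_bigr => i _; rewrite (ipZr dot_ip).
have hdiff : lm * dot u u - dot u (Gop u) = \sum_i al i * (al i * (lm - nu i)).
  rewrite hdu hdG mulr_sumr -sumrB; apply: eq_bigr => i _; ring.
have hterm i : 0 <= al i * (al i * (lm - nu i)).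
  case: (ltP lm (nu i)) => h.
    have -> : al i = 0 by rewrite /al (ip_sym dot_ip) hz.
    by rewrite mul0r.
  by rewrite mulrA mulr_ge0 ?subr_ge0 // -expr2 sqr_ge0.
split.
  by rewrite -subr_ge0 hdiff; apply: sumr_ge0 => i _.
move=> heq.
have h0 : \sum_i al i * (al i * (lm - nu i)) = 0 by rewrite -hdiff heq subrr.
have hai i : al i * nu i = al i * lm.
  have := @psumr_eq0P _ _ predT (fun i => al i * (al i * (lm - nu i))) (fun i _ => hterm i) h0 i isT.
  rewrite mulrA -expr2 => /eqP; rewrite mulf_eq0 sqrf_eq0 subr_eq0.
  by case/orP => /eqP->; rewrite ?mul0r.
rewrite hGu {1}hue scaler_sumr; apply: eq_bigr => i _.
by rewrite hai scalerA mulrC.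
Qed.

End SLsec.

End Spec.
Unset Implicit Arguments.
Section Main.
Variables (R : rcfType) (V : lmodType R) (cov : V -> V -> R)
  (K : nat) (p : 'I_K -> nat) (x : forall k : 'I_K, 'I_(p k) -> V)
  (r : 'I_K -> nat) (fv : {k : 'I_K & 'I_(r k)} -> V)
  (rf : nat) (lam : 'I_rf -> R) (eta : 'I_rf -> {k : 'I_K & 'I_(r k)} -> R).
Set Implicit Arguments.
Hypothesis hip : inner_product cov.
Hypothesis hr : forall k, (0 < r k)%N.
Hypothesis hf : forall k : 'I_K, orthonormalF cov (fun i : 'I_(r k) => fk fv i) /\
     (forall v, inspan (x k) v <-> inspan (fun i : 'I_(r k) => fk fv i) v).
Hypothesis hdim : is_dim (sum_span x predT) rf.
Hypothesis heta_on : forall l l' : 'I_rf, \sum_t eta l t * eta l' t = (l == l')%:R.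
Hypothesis heta_eig : forall (l : 'I_rf) t,
  \sum_s cov (fv t) (fv s) * eta l s = lam l * eta l t.
Hypothesis hkth : forall l : 'I_rf, kth_eig (fun t s => cov (fv t) (fv s)) l (lam l).

Local Notation T := {k : 'I_K & 'I_(r k)}.
Local Notation A := (fun t s => cov (fv t) (fv s)).
Local Notation w := (wsol fv lam eta).

Lemma Asym t s : A t s = A s t.
Proof. exact: (ip_sym hip). Qed.

Lemma sum_sig (M : nmodType) (G : T -> M) :
  \sum_t G t = \sum_k \sum_(i < r k) G (existT _ k i).
Proof.
rewrite (@sig_big_dep _ _ _ _ (fun k => ('I_(r k) : finType)) predT (fun _ => predT) (fun k i => G (existT _ k i))) /=.
by apply: eq_bigr => -[k i].
Qed.

Lemma fk_orth k (i j : 'I_(r k)) : cov (fk fv i) (fk fv j) = (i == j)%:R.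
Proof. by have [h _] := hf k; apply: h. Qed.

Lemma fk_x k (i : 'I_(r k)) : inspan (x k) (fk fv i).
Proof. by have [_ h] := hf k; apply/h/spanP_gen. Qed.

Lemma cov_fk_comb k (c : 'I_(r k) -> R) i :
  cov (\sum_i' c i' *: fk fv i') (fk fv i) = c i.
Proof.
rewrite (ip_suml hip) (bigD1 i) //= (ipZl hip) fk_orth eqxx mulr1.
rewrite big1 ?addr0 // => j nji; by rewrite (ipZl hip) fk_orth (negbTE nji) mulr0.
Qed.

Lemma spank_expand k v : inspan (x k) v ->
  v = \sum_(i < r k) cov v (fk fv i) *: fk fv i.
Proof.
have [_ h] := hf k; move/h => [c ->].
by apply: eq_bigr => i _; rewrite cov_fk_comb.
Qed.

Definition Phi (u : {ffun T -> R^o}) : V := \sum_t (u t : R) *: fv t.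

Lemma Phi_lin (I : finType) (P : pred I) (c : I -> R) (g : I -> {ffun T -> R^o}) :
  Phi (\sum_(i | P i) c i *: g i) = \sum_(i | P i) c i *: Phi (g i).
Proof.
rewrite /Phi; under eq_bigr do rewrite sum_ffunE scaler_suml.
rewrite exchange_big; apply: eq_bigr => i _; rewrite scaler_sumr.
by apply: eq_bigr => t _; rewrite scaleffE scalerA.
Qed.

Lemma cov_fv_Phi t u : cov (fv t) (Phi u) = Gop A u t.
Proof.
rewrite (ip_sumr hip) ffunE; apply: eq_bigr => s _.
by rewrite (ipZr hip) mulrC.
Qed.

Lemma cov_Phi_l u v : cov (Phi u) v = dot u [ffun t => cov (fv t) v].
Proof.
rewrite (ip_suml hip); apply: eq_bigr => t _.
by rewrite (ipZl hip) ffunE.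
Qed.

Lemma cov_PhiPhi u v : cov (Phi u) (Phi v) = dot u (Gop A v).
Proof.
rewrite cov_Phi_l; apply: eq_bigr => t _; congr (_ * _); rewrite ffunE; exact: cov_fv_Phi.
Qed.

Lemma Phi_delta t : Phi (@delta R _ t) = fv t.
Proof.
rewrite /Phi (bigD1 t) //= ffunE eqxx scale1r big1 ?addr0 // => s nst.
by rewrite ffunE (negbTE nst) scale0r.
Qed.

Lemma w_Phi l : w l = (Num.sqrt (lam l))^-1 *: Phi (Etaf eta l).
Proof. by rewrite /wsol /Phi; congr (_ *: _); apply: eq_bigr => t _; rewrite ffunE. Qed.

Lemma sumspan_fv v : sum_span x predT v -> inspan fv v.
Proof.
move=> [u [hu ->]]; apply: spanP_sum => k _.
have [_ h] := hf k; have := hu k isT; move/h => [c ->].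
apply: spanP_sum => i _; apply: spanP_scale.
exact: (spanP_gen fv (i := existT _ k i)).
Qed.

Lemma fv_sumspan v : inspan fv v -> sum_span x predT v.
Proof.
move=> [c ->]; exists (fun k => \sum_(i < r k) c (existT _ k i) *: fk fv i); split.
  move=> k _; have [_ h] := hf k; apply/h.
  by exists (fun i => c (existT _ k i)).
by rewrite sum_sig.
Qed.

Lemma w_fv l : inspan fv (w l).
Proof.
rewrite /wsol; apply: spanP_scale; apply: spanP_sum => t _; apply: spanP_scale.
exact: spanP_gen.
Qed.

Lemma basis_facts : exists b : 'I_rf -> V, lin_indep b /\
  (forall v, sum_span x predT v <-> inspan b v).
Proof. exact: hdim. Qed.


Lemma dot_delta t (u : {ffun T -> R^o}) : dot (@delta R _ t) u = u t.
Proof.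
rewrite /dot (bigD1 t) //= ffunE eqxx mul1r big1 ?addr0 // => s nst.
by rewrite ffunE (negbTE nst) mul0r.
Qed.

Lemma lampos l : 0 < lam l.
Proof.
rewrite ltNge; apply/negP => hle.
have [e [nu [he1 he2 hsort [i0 [hi0 hnu]]]]] := hkth l.
have hw : is_wit A e nu by split.
pose g i := Phi (Ef e i).
have hg i : cov (g i) (g i) = nu i.
  rewrite cov_PhiPhi (wit_eig hw) (ipZr (dot_ip _ _)) (wit_orth hw) eqxx.
  by rewrite mulr1.
have g0 : forall i, (l <= nat_of_ord i)%N -> g i = 0.
  move=> i hli; apply: (ip_eq0 hip); apply/eqP; rewrite eq_le hg.
  rewrite -{2}(hg i) ip_ge0 // andbT.
  apply: le_trans hle; rewrite -hnu; apply: hsort; by rewrite hi0.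
have hfv t : fv t = \sum_(i : 'I__ | (i < l)%N) e i t *: g i.
  rewrite -Phi_delta {1}(wit_complete hw (@delta R _ t)) Phi_lin.
  rewrite (bigID (fun i : 'I__ => (i < l)%N)) /= [X in _ + X]big1 ?addr0.
    by apply: eq_bigr => i _; rewrite dot_delta ffunE.
  by move=> i; rewrite -leqNgt => /g0; rewrite /g => ->; rewrite scaler0.
have hsp v : sum_span x predT v -> inspanP (fun i : 'I__ => (i < l)%N) g v.
  move/sumspan_fv => hv; apply: spanP_trans hv => t _.
  by exists (fun i => e i t); exact: hfv t.
have [b [hbi hbs]] := hdim.
have hle2 := @steinitzP _ _ _ _ (fun i : 'I__ => (i < l)%N) predT g b
  (fun j _ => hsp _ ((hbs _).2 (spanP_gen b (i:=j) isT)))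
  (fun c hc j _ => hbi c hc j).
have := leq_trans hle2 (card_ord_le _ l).
by rewrite cardT -cardE card_ord leqNgt ltn_ord.
Qed.

Lemma sqrt_lam l : Num.sqrt (lam l) ^+ 2 = lam l.
Proof. by rewrite sqr_sqrtr // ltW // lampos. Qed.

Lemma sqrt_lam_gt0 l : 0 < Num.sqrt (lam l).
Proof. by rewrite sqrtr_gt0 lampos. Qed.

Lemma cov_fw l t : cov (fv t) (w l) = Num.sqrt (lam l) * eta l t.
Proof.
rewrite w_Phi (ipZr hip) cov_fv_Phi (Etaf_eig heta_eig) scaleffE ffunE.
have := sqrt_lam l; have := sqrt_lam_gt0 l.
set s := Num.sqrt (lam l) => hs hsl; rewrite -hsl.
by field; rewrite gt_eqF.
Qed.

Lemma cov_wfv l t : cov (w l) (fv t) = Num.sqrt (lam l) * eta l t.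
Proof. by rewrite (ip_sym hip) cov_fw. Qed.

Lemma cov_ww l m : cov (w l) (w m) = (l == m)%:R.
Proof.
rewrite {1}w_Phi (ipZl hip) cov_Phi_l.
have -> : dot (Etaf eta l) [ffun t => cov (fv t) (w m)] =
          Num.sqrt (lam m) * (l == m)%:R.
  rewrite -heta_on mulr_sumr; apply: eq_bigr => t _.
  by rewrite !ffunE cov_fw mulrCA.
have [<-|nlm] := eqVneq l m; last by rewrite mulr0 mulr0.
by rewrite mulr1 mulVf // gt_eqF // sqrt_lam_gt0.
Qed.

Lemma w_unit l : cov (w l) (w l) = 1.
Proof. by rewrite cov_ww eqxx. Qed.

Lemma sd_unit u : cov u u = 1 -> sd cov u = 1.
Proof. by move=> h; rewrite /sd h sqrtr1. Qed.

Lemma corr_unit u v : cov u u = 1 -> cov v v = 1 -> corr cov u v = cov u v.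
Proof.
by move=> hu hv; rewrite /corr !sd_unit // oner_eq0 /= mulr1 divr1.
Qed.

Lemma prevw_mem l u : u \in prevw fv lam eta l -> exists m : 'I_rf, (m < l)%N /\ u = w m.
Proof.
rewrite /prevw => /mapP [m]; rewrite mem_filter => /andP[hml _] ->.
by exists m.
Qed.

Lemma w_prevw (l : 'I_rf) (m : 'I_rf) : (m < l)%N -> w m \in prevw fv lam eta l.
Proof.
by move=> hml; rewrite /prevw; apply: map_f; rewrite mem_filter hml mem_enum.
Qed.

Lemma cov_fkw l k (i : 'I_(r k)) : cov (fk fv i) (w l) = Num.sqrt (lam l) * eta l (existT _ k i).
Proof. exact: (cov_fw l (existT _ k i)). Qed.

Lemma OPT l z' w' : stage_feasible cov x (prevw fv lam eta l) z' w' ->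
  gcca_obj cov z' w' <= lam l.
Proof.
case=> hz hw1 hwp.
pose u : {ffun T -> R^o} := [ffun t => cov (fv t) w'].
have hu (m : 'I_rf) : (m < l)%N -> dot (Etaf eta m) u = 0.
  move=> hml; have := hwp _ (w_prevw hml).
  rewrite (ip_sym hip) w_Phi (ipZl hip) cov_Phi_l.
  move/eqP; rewrite mulf_eq0 invr_eq0 gt_eqF ?sqrt_lam_gt0 //= => /eqP.
  done.
have [hSL _] := @SL R _ (fun t s => cov (fv t) (fv s)) Asym _ _ _ heta_on heta_eig hkth l u hu.
set d := dot u u.
have hd : cov (Phi u) w' = d by rewrite cov_Phi_l.
have hGu : cov (Phi u) (Phi u) = dot u (Gop A u) by rewrite cov_PhiPhi.
have hCS := ip_CS hip (Phi u) w'.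
rewrite hw1 mulr1 hd hGu in hCS.
have hdl : d <= lam l.
  have hd0 : 0 <= d := ip_ge0 (dot_ip _ _) u.
  have [d0|dn0] := eqVneq d 0; first by rewrite d0 ltW // lampos.
  have hdp : 0 < d by rewrite lt_def dn0 hd0.
  have : d * d <= lam l * d by rewrite -expr2; apply: le_trans hCS hSL.
  by rewrite ler_pM2r.
have hblock k : corr cov (z' k) w' ^+ 2 <= \sum_(i < r k) u (existT _ k i) ^+ 2.
  have [hzk hzk1] := hz k.
  rewrite corr_unit //.
  pose P := \sum_(i < r k) (u (existT _ k i) : R) *: fk fv i.
  have e1 : cov (z' k) w' = cov (z' k) P.
    rewrite {1}(spank_expand hzk) (ip_suml hip) /P (ip_sumr hip); apply: eq_bigr => i _.
    by rewrite (ipZl hip) (ipZr hip) ffunE mulrC.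
  have e2 : cov P P = \sum_(i < r k) u (existT _ k i) ^+ 2.
    rewrite {1}/P (ip_suml hip); apply: eq_bigr => i _.
    by rewrite (ipZl hip) (ip_sym hip) cov_fk_comb expr2.
  rewrite e1; apply: le_trans (ip_CS hip _ _) _; by rewrite hzk1 mul1r e2.
rewrite /gcca_obj; apply: le_trans hdl.
have -> : d = \sum_k \sum_(i < r k) u (existT _ k i) ^+ 2.
  by rewrite /d /dot sum_sig; apply: eq_bigr => k _; apply: eq_bigr => i _; rewrite expr2.
by apply: ler_sum => k _; apply: hblock.
Qed.

Lemma etanorm_sq l k : etanorm eta l k ^+ 2 = \sum_(i < r k) eta l (existT _ k i) ^+ 2.
Proof. by rewrite sqr_sqrtr // sumr_ge0 // => i _; rewrite sqr_ge0. Qed.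

Lemma etanorm0 l k : etanorm eta l k = 0 -> forall i, eta l (existT _ k i) = 0.
Proof.
move=> h i.
have hs : \sum_(i < r k) eta l (existT _ k i) ^+ 2 = 0 by rewrite -etanorm_sq h expr0n.
have := @psumr_eq0P _ _ predT (fun i : 'I_(r k) => eta l (existT _ k i) ^+ 2) (fun i _ => sqr_ge0 _) hs i isT.
by move/eqP; rewrite sqrf_eq0 => /eqP.
Qed.

Lemma etanorm_ge0 l k : 0 <= etanorm eta l k.
Proof. exact: sqrtr_ge0. Qed.

Lemma zdir_props l k : etanorm eta l k != 0 ->
  [/\ inspan (x k) (zdir fv eta l k), cov (zdir fv eta l k) (zdir fv eta l k) = 1
    & cov (zdir fv eta l k) (w l) = Num.sqrt (lam l) * etanorm eta l k].
Proof.
move=> hn; set n := etanorm eta l k in hn *.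
have hn2 : n ^+ 2 != 0 by rewrite expf_neq0.
split.
- have [_ h] := hf k; apply/h.
  by exists (fun i => eta l (existT _ k i) / n).
- rewrite {1}/zdir (ip_suml hip).
  under eq_bigr do rewrite (ipZl hip) (ip_sym hip) cov_fk_comb -expr2 expr_div_n.
  by rewrite -mulr_suml -etanorm_sq -/n divff.
- rewrite /zdir (ip_suml hip).
  under eq_bigr do rewrite (ipZl hip) cov_fkw.
  have -> : \sum_(i < r k) eta l (existT _ k i) / n * (Num.sqrt (lam l) * eta l (existT _ k i))
          = Num.sqrt (lam l) / n * \sum_(i < r k) eta l (existT _ k i) ^+ 2.
    rewrite mulr_sumr; apply: eq_bigr => i _; by rewrite expr2; field; rewrite -?expf_eq0.
  by rewrite -etanorm_sq -/n; field; rewrite -?expf_eq0.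
Qed.

Lemma zk_props l z k : validI cov fv x eta l k z ->
  [/\ inspan (x k) z, cov z z = 1
    & exists s : R, (s = 1 \/ s = -1) /\ cov z (w l) = s * (Num.sqrt (lam l) * etanorm eta l k)].
Proof.
rewrite /validI; case: eqP => [h0 [hz hz1]|hn [s [hs ->]]].
  split => //; exists 1; split; first by left.
  rewrite h0 !mulr0 (spank_expand hz) (ip_suml hip) big1 // => i _.
  by rewrite (ipZl hip) cov_fkw etanorm0 // !mulr0.
have [h1 h2 h3] := zdir_props (introN eqP hn).
split.
- exact: spanP_scale.
- by rewrite (ipZl hip) (ipZr hip) h2 mulr1; case: hs => ->; rewrite ?mulr1 ?mulrNN ?mulr1.
- by exists s; split => //; rewrite (ipZl hip) h3.
Qed.

Lemma sum_eta_sq l : \sum_k etanorm eta l k ^+ 2 = 1.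
Proof.
under eq_bigr do rewrite etanorm_sq.
transitivity ((l == l)%:R : R); last by rewrite eqxx.
rewrite -heta_on.
by rewrite sum_sig; apply: eq_bigr => k _; apply: eq_bigr => i _; rewrite expr2.
Qed.

Lemma part1 l z : (forall k, validI cov fv x eta l k (z k)) ->
  [/\ stage_solution cov x (prevw fv lam eta l) z (w l),
      (forall k, exists s : R, (s = 1 \/ s = -1) /\
         corr cov (z k) (w l) = s * (Num.sqrt (lam l) * etanorm eta l k))
    & gcca_obj cov z (w l) = lam l].
Proof.
move=> hv.
have hzk k := zk_props (hv k).
have hcorr k : corr cov (z k) (w l) = cov (z k) (w l).
  by have [_ h1 _] := hzk k; rewrite corr_unit // w_unit.
have hobj : gcca_obj cov z (w l) = lam l.
  rewrite /gcca_obj; under eq_bigr do rewrite hcorr.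
  transitivity (\sum_k lam l * etanorm eta l k ^+ 2).
    apply: eq_bigr => k _; have [_ _ [s [hs ->]]] := hzk k.
    by rewrite !exprMn sqrt_lam; case: hs => ->; rewrite ?sqrrN expr1n mul1r.
  by rewrite -mulr_sumr sum_eta_sq mulr1.
split => //.
- split.
  + split.
    * by move=> k; have [h1 h2 _] := hzk k.
    * exact: w_unit.
    * move=> u /prevw_mem [m [hml ->]]; rewrite cov_ww.
      have -> : (l == m) = false by apply/eqP => e; rewrite e ltnn in hml.
      by [].
  + by move=> z' w' hf'; rewrite hobj; exact: OPT hf'.
- by move=> k; have [_ _ [s [hs he]]] := hzk k; exists s; rewrite hcorr.
Qed.

Lemma w_expand v : sum_span x predT v -> v = \sum_l cov v (w l) *: w l.
Proof.
have [b [hbi hbs]] := hdim.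
move=> hv.
apply: (span_orth hip (PI := predT) (PJ := predT) (b := b) (g := w)).
- by [].
- by move=> j j' _ _; apply: cov_ww.
- by move=> j _; apply/hbs; apply: fv_sumspan; apply: w_fv.
- exact/hbs.
Qed.

Lemma span_w v : sum_span x predT v <-> inspan w v.
Proof.
split => [h|h].
- by exists (fun l => cov v (w l)); exact: w_expand h.
- by apply: fv_sumspan; apply: spanP_trans h => l _; apply: w_fv.
Qed.

Lemma part2a l k : etanorm eta l k = 0 <-> (forall v, inspan (x k) v -> cov (w l) v = 0).
Proof.
split.
- move=> h0 v hv; rewrite (spank_expand hv) (ip_sumr hip) big1 // => i _.
  by rewrite (ipZr hip) (ip_sym hip (w l)) cov_fkw etanorm0 // !mulr0.
- move=> h.
  have hi i : eta l (existT _ k i) = 0.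
    have := h _ (fk_x i); rewrite (ip_sym hip) cov_fkw => /eqP.
    by rewrite mulf_eq0 gt_eqF ?sqrt_lam_gt0 //= => /eqP.
  by rewrite /etanorm big1 ?sqrtr0 // => i _; rewrite hi expr0n.
Qed.

Lemma part2b l k : 0 <= corr cov (zII fv eta l k) (w l).
Proof.
rewrite /zII; case: eqP => [_|hn].
  by rewrite /corr /sd (ip0l hip) sqrtr0 eqxx.
have [_ h2 h3] := zdir_props (introN eqP hn).
by rewrite corr_unit ?w_unit // h3 mulr_ge0 ?sqrtr_ge0 ?etanorm_ge0.
Qed.

Lemma etafk l k : \sum_(i < r k) eta l (existT _ k i) *: fk fv i = etanorm eta l k *: zII fv eta l k.
Proof.
rewrite /zII; case: eqP => [h0|hn].
  by rewrite scaler0 big1 // => i _; rewrite etanorm0 // scale0r.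
rewrite /zdir scaler_sumr; apply: eq_bigr => i _; rewrite scalerA; congr (_ *: _).
by rewrite mulrC divfK //; apply/eqP.
Qed.

Lemma zII_x l k : inspan (x k) (zII fv eta l k).
Proof.
rewrite /zII; case: eqP => [_|hn]; first exact: spanP_0.
by have [] := zdir_props (introN eqP hn).
Qed.

Lemma part2c k v : inspan (x k) v <-> inspan (fun l => zII fv eta l k) v.
Proof.
split; last by move=> hv; apply: spanP_trans hv => l _; exact: zII_x.
move=> hv.
have hfk (i0 : 'I_(r k)) : inspan (fun l => zII fv eta l k) (fk fv i0).
  have hs : sum_span x predT (fk fv i0).
    by apply: fv_sumspan; exact: (spanP_gen fv (i := existT _ k i0) isT).
  have he := w_expand hs.
  have hdelta i : (i0 == i)%:R = \sum_l lam l * eta l (existT _ k i0) * eta l (existT _ k i).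
    rewrite -fk_orth {1}he (ip_suml hip); apply: eq_bigr => l _.
    rewrite (ipZl hip) cov_fkw (ip_sym hip (w l)) cov_fkw.
    have sl := sqrt_lam l; set s := Num.sqrt (lam l) in sl *.
    by rewrite -sl; ring.
  exists (fun l => lam l * eta l (existT _ k i0) * etanorm eta l k).
  transitivity (\sum_(i < r k) (i0 == i)%:R *: fk fv i).
    rewrite (bigD1 i0) //= eqxx scale1r big1 ?addr0 // => i ni.
    by rewrite eq_sym (negbTE ni) scale0r.
  under eq_bigr do rewrite hdelta scaler_suml.
  rewrite exchange_big; apply: eq_bigr => l _.
  rewrite -scalerA -etafk scaler_sumr; apply: eq_bigr => i _.
  by rewrite scalerA.
have [_ h] := hf k.
apply: (spanP_trans (g := fun i : 'I_(r k) => fk fv i)); last exact/h.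
by move=> i _; apply: hfk.
Qed.

Lemma part3 (zz : 'I_rf -> 'I_K -> V) :
  (forall l k, validI cov fv x eta l k (zz l k)) \/
  (forall l k, zz l k = zII fv eta l k) ->
  forall (l : 'I_rf) (k : 'I_K),
    lam l <= 1 ->
    ~ (forall v, inspanP (fun m : 'I_rf => (m < l)%N)
                         (fun m => zz m k) v <-> inspan (x k) v) ->
    exists (z : 'I_K -> V) (w' : V),
      [/\ stage_solution cov x (prevw fv lam eta l) z w',
          inspan (x k) w'
        & forall v, sum_span x (fun j => j != k) v -> cov w' v = 0].
Proof.
move=> hzz l k hl1 hne.
have hzx m : inspan (x k) (zz m k).
  case: hzz => h; first by have [] := zk_props (h m k).
  by rewrite h; apply: zII_x.
have hrel m (c : 'I_(r k) -> R) :
    \sum_(i < r k) cov (zz m k) (fk fv i) * c i = 0 -> \sum_(i < r k) eta m (existT _ k i) * c i = 0.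
  move=> h0.
  have [hn0|hn] := eqVneq (etanorm eta m k) 0.
    by rewrite big1 // => i _; rewrite etanorm0 // mul0r.
  have [s [hs hzeq]] : exists s : R, s != 0 /\ zz m k = s *: zdir fv eta m k.
    case: hzz => h.
      move: (h m k); rewrite /validI (negbTE hn) => -[s [hs ->]]; exists s; split => //.
      by case: hs => ->; rewrite ?oppr_eq0 oner_eq0.
    by exists 1; rewrite h /zII (negbTE hn) scale1r oner_eq0.
  move: h0; rewrite hzeq /zdir.
  under eq_bigr do rewrite (ipZl hip) cov_fk_comb.
  have -> : \sum_(i < r k) s * (eta m (existT _ k i) / etanorm eta m k) * c i =
            (s / etanorm eta m k) * \sum_(i < r k) eta m (existT _ k i) * c i.
    by rewrite mulr_sumr; apply: eq_bigr => i _; field.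
  move/eqP; rewrite mulf_eq0 => /orP[|/eqP//].
  by rewrite mulf_eq0 invr_eq0 (negbTE hs) (negbTE hn).
pose Gm : 'M[R]_(rf, r k) :=
  \matrix_(m, i) (if (m < l)%N then cov (zz m k) (fk fv i) else 0).
have : kermx Gm^T != 0.
  apply/negP => /eqP hk0; apply: hne => v; split.
    by move=> hv; apply: spanP_trans hv => m _; exact: hzx.
  move=> hv.
  have hfull : row_full Gm.
    rewrite /row_full eqn_leq rank_leq_col /=.
    have := mxrank_ker Gm^T; rewrite hk0 mxrank0 mxrank_tr => /esym /eqP.
    by rewrite subn_eq0.
  have [B hB] := row_fullP hfull.
  apply: (spanP_trans (g := fun i : 'I_(r k) => fk fv i)); last first.
    by have [_ h] := hf k; apply/h.
  move=> i _; exists (fun m => B i m).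
  transitivity (\sum_(i' < r k) (1%:M : 'M[R]_(r k)) i i' *: fk fv i').
    rewrite (bigD1 i) //= mxE eqxx scale1r big1 ?addr0 // => j nj.
    by rewrite mxE eq_sym (negbTE nj) scale0r.
  rewrite -hB.
  under eq_bigr do rewrite mxE scaler_suml.
  rewrite exchange_big /=.
  rewrite (bigID (fun m : 'I_rf => (m < l)%N)) /= [X in _ + X]big1 ?addr0; last first.
    by move=> m hm; apply: big1 => i' _; rewrite /Gm mxE (negbTE hm) mulr0 scale0r.
  apply: eq_bigr => m hm.
  rewrite [in RHS](spank_expand (hzx m)) scaler_sumr; apply: eq_bigr => i' _.
  by rewrite /Gm mxE hm scalerA.
case/rowV0Pn => y /sub_kermxP hy y0.
pose c i := y 0 i.
have hc (m : 'I_rf) : (m < l)%N -> \sum_(i < r k) cov (zz m k) (fk fv i) * c i = 0.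
  move=> hml; transitivity ((y *m Gm^T) 0 m); last by rewrite hy mxE.
  by rewrite mxE; apply: eq_bigr => i _; rewrite !mxE hml mulrC.
have heta0 (m : 'I_rf) : (m < l)%N -> \sum_(i < r k) eta m (existT _ k i) * c i = 0.
  by move=> h; apply: hrel; apply: hc.
set cc := \sum_i c i ^+ 2.
have cc_pos : 0 < cc.
  have hcs0 : 0 <= cc by apply: sumr_ge0 => i _; apply: sqr_ge0.
  rewrite lt_def hcs0 andbT; apply: contra y0 => /eqP h0; apply/eqP/rowP => i.
  rewrite mxE.
  have := @psumr_eq0P _ _ predT (fun i => c i ^+ 2) (fun i _ => sqr_ge0 _) h0 i isT.
  by move/eqP; rewrite sqrf_eq0 => /eqP.
pose v : {ffun T -> R^o} := [ffun t => \sum_i c i * (t == existT _ k i)%:R].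
have hsv (F : T -> R) : \sum_t F t * v t = \sum_i c i * F (existT _ k i).
  under eq_bigr do rewrite [v _]ffunE mulr_sumr.
  rewrite exchange_big; apply: eq_bigr => i _.
  rewrite (bigD1 (existT _ k i)) //= eqxx mulr1 big1 ?addr0; first by rewrite mulrC.
  by move=> t /negbTE ->; rewrite !mulr0.
have hvat i : v (existT _ k i) = c i.
  rewrite ffunE (bigD1 i) //= eqxx mulr1 big1 ?addr0 // => j nj.
  have -> : (existT (fun k => 'I_(r k)) k i == existT _ k j) = false.
    by apply/negbTE; rewrite eq_Tagged /=; rewrite eq_sym.
  by rewrite mulr0.
pose w0 := \sum_i c i *: fk fv i.
have hv_eta (m : 'I_rf) : (m < l)%N -> dot (Etaf eta m) v = 0.
  move=> hml; rewrite /dot.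
  transitivity (\sum_t eta m t * v t); first by apply: eq_bigr => t _; rewrite ffunE.
  by rewrite hsv -[RHS](heta0 m hml); apply: eq_bigr => i _; rewrite mulrC.
have hGv t : Gop A v t = cov (fv t) w0.
  rewrite /Gop ffunE hsv /w0 (ip_sumr hip); apply: eq_bigr => i _.
  by rewrite (ipZr hip).
have hdvv : dot v v = cc.
  by rewrite /dot hsv; apply: eq_bigr => i _; rewrite hvat expr2.
have hcovw0 i : cov (fk fv i) w0 = c i.
  by rewrite (ip_sym hip) cov_fk_comb.
have hdvGv : dot v (Gop A v) = cc.
  rewrite (ip_sym (dot_ip _ _)) /dot.
  transitivity (\sum_t (Gop A v t : R) * v t); first by [].
  by rewrite hsv; apply: eq_bigr => i _; rewrite hGv hcovw0 expr2.
have [hSL1 hSL2] := @SL R _ (fun t s => cov (fv t) (fv s)) Asym _ _ _ heta_on heta_eig hkth l v hv_eta.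
rewrite hdvGv hdvv in hSL1 hSL2.
have hl : lam l = 1.
  apply/eqP; rewrite eq_le hl1 /=.
  by rewrite -(ler_pM2r cc_pos) mul1r.
have hGv1 : Gop A v = v.
  by rewrite -[RHS]scale1r -hl; apply: hSL2; rewrite hl mul1r.
have hw0orth t : tag t != k -> cov (fv t) w0 = 0.
  move=> ht; rewrite -hGv hGv1 ffunE big1 // => i _.
  have -> : (t == existT _ k i) = false.
    by apply/negbTE; apply: contra ht => /eq_tag ->.
  by rewrite mulr0.
have hw0w0 : cov w0 w0 = cc.
  rewrite {1}/w0 (ip_suml hip); apply: eq_bigr => i _.
  by rewrite (ipZl hip) hcovw0 expr2.
pose w' := (Num.sqrt cc)^-1 *: w0.
have hsc : Num.sqrt cc ^+ 2 = cc by rewrite sqr_sqrtr // ltW.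
have hsc0 : Num.sqrt cc != 0 by rewrite gt_eqF // sqrtr_gt0.
have hw'1 : cov w' w' = 1.
  rewrite (ipZl hip) (ipZr hip) hw0w0.
  move: hsc hsc0; set s := Num.sqrt cc => hs hs0.
  by rewrite -hs; field.
have hw'x : inspan (x k) w'.
  apply: spanP_scale; have [_ h] := hf k; apply/h.
  by exists c.
have hw'orth : forall v', sum_span x (fun j => j != k) v' -> cov w' v' = 0.
  move=> v' [u [hu ->]]; rewrite (ip_sumr hip) big1 // => j hj.
  rewrite (spank_expand (hu j hj)) (ip_sumr hip) big1 // => i _.
  rewrite (ipZr hip) (ipZl hip) (ip_sym hip w0).
  by rewrite (hw0orth (existT _ j i) hj) !mulr0.
have hw'prev : forall u, u \in prevw fv lam eta l -> cov w' u = 0.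
  move=> u /prevw_mem [m [hml ->]].
  rewrite (ipZl hip) w_Phi (ipZr hip) (ip_sym hip w0) cov_Phi_l.
  have -> : [ffun t => cov (fv t) w0] = Gop A v.
    by apply/ffunP => t; rewrite ffunE hGv.
  by rewrite hGv1 hv_eta // !mulr0.
pose z j := if j == k then w' else fk fv (Ordinal (hr j)).
have hzf : stage_feasible cov x (prevw fv lam eta l) z w'.
  split => //.
  move=> j; rewrite /z; case: eqP => [->|_]; first by split.
  by split; [exact: fk_x | rewrite fk_orth eqxx].
exists z, w'; split => //.
split => // z2 w2 hf2.
apply: le_trans (OPT hf2) _; rewrite hl.
rewrite /gcca_obj (bigD1 k) //= {1}/z eqxx corr_unit // hw'1 expr1n.
by rewrite lerDl sumr_ge0 // => j _; apply: sqr_ge0.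
Qed.
End Main.

Set Implicit Arguments.

Theorem theorem1
  (R : rcfType) (V : lmodType R) (cov : V -> V -> R)
  (K : nat) (p : 'I_K -> nat) (x : forall k : 'I_K, 'I_(p k) -> V)
  (r : 'I_K -> nat) (fv : {k : 'I_K & 'I_(r k)} -> V)
  (rf : nat) (lam : 'I_rf -> R) (eta : 'I_rf -> {k : 'I_K & 'I_(r k)} -> R) :
  inner_product cov ->
  (1 < K)%N ->
  (* f_k : entries form an orthonormalF basis of span(x_k^T); r_k >= 1 *)
  (forall k : 'I_K, (0 < r k)%N) ->
  (forall k : 'I_K, orthonormalF cov (fun i : 'I_(r k) => fk fv i) /\
     (forall v, inspan (x k) v <-> inspan (fun i : 'I_(r k) => fk fv i) v)) ->
  (* r_f = dim sum_k span(x_k^T) *)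
  is_dim (sum_span x predT) rf ->
  (* eta^(l), l < r_f : orthonormalF eigenvectors of cov(f) for the
     (l+1)-th largest eigenvalue lam l (0-based indexing) *)
  (forall l l' : 'I_rf, \sum_t eta l t * eta l' t = (l == l')%:R) ->
  (forall (l : 'I_rf) t, \sum_s cov (fv t) (fv s) * eta l s = lam l * eta l t) ->
  (forall l : 'I_rf, kth_eig (fun t s => cov (fv t) (fv s)) l (lam l)) ->
  let w := wsol fv lam eta in
  (* (i) *)
  [/\ (forall (l : 'I_rf) (z : 'I_K -> V),
         (forall k, validI cov fv x eta l k (z k)) ->
         [/\ stage_solution cov x (prevw fv lam eta l) z (w l),
             (forall k, exists s : R, (s = 1 \/ s = -1) /\
                corr cov (z k) (w l) = s * (Num.sqrt (lam l) * etanorm eta l k))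
           & gcca_obj cov z (w l) = lam l]),
      (forall v, sum_span x predT v <-> inspan w v),
  (* (ii) *)
      (forall (l : 'I_rf) (k : 'I_K),
         (etanorm eta l k = 0 <->
            (forall v, inspan (x k) v -> cov (w l) v = 0)) /\
         0 <= corr cov (zII fv eta l k) (w l)),
      (forall (k : 'I_K) v,
         inspan (x k) v <-> inspan (fun l => zII fv eta l k) v)
  (* (iii) *)
    & forall zz : 'I_rf -> 'I_K -> V,
        (forall l k, validI cov fv x eta l k (zz l k)) \/
        (forall l k, zz l k = zII fv eta l k) ->
        forall (l : 'I_rf) (k : 'I_K),
          lam l <= 1 ->
          ~ (forall v, inspanP (fun m : 'I_rf => (m < l)%N)
                               (fun m => zz m k) v <-> inspan (x k) v) ->
          exists (z : 'I_K -> V) (w' : V),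
            [/\ stage_solution cov x (prevw fv lam eta l) z w',
                inspan (x k) w'
              & forall v, sum_span x (fun j => j != k) v -> cov w' v = 0]].
Proof.
move=> hip hK hr hf hdim heta_on heta_eig hkth w.
split.
- by move=> l z hv; exact: (part1 hip hf hdim heta_on heta_eig hkth hv).
- by move=> v; exact: (span_w hip hf hdim heta_on heta_eig hkth v).
- move=> l k; split; first exact: (part2a hip hf hdim heta_eig hkth l k).
  exact: (part2b hip hf hdim heta_on heta_eig hkth l k).
- by move=> k v; exact: (part2c hip hf hdim heta_on heta_eig hkth k v).
- by move=> zz hzz l k hl hne; exact: (part3 hip hr hf hdim heta_on heta_eig hkth hzz hl hne).
Qed.
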